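(* A well-founded order $P$ is up-regular if and only if it has no level-induced suborder isomorphic to $O_{obs1}$ and no level-induced suborder isomorphic to $O_{obs2}$. Consequently every well-founded order with property (itov) is up-regular.
   Context: Orders are partial orders; $x\sim y$ means $x\ne y$ and $x,y$ incomparable. $O_{obs1}$ is the order on $\{a,b,c,d\}$ whose only comparabilities are $a<b$, $c<d$; $O_{obs2}$ is the order on $\{a,b,c,d\}$ whose only comparabilities are $a<b$, $c<d$, $c<b$. Property (itov): no induced suborder isomorphic to $O_{obs1}$ or $O_{obs2}$. For a well-founded order $Q$, $\mathrm{Level}_Q(x)=\sup\{\mathrm{Level}_Q(y)+1:y<x\}$. A level-induced suborder of $P$ is a subset $S$ with induced order $P|_S$ such that for all $x,y\in S$: $\mathrm{Level}_{P|_S}(x)=\mathrm{Level}_{P|_S}(y)$ iff $\mathrm{Level}_P(x)=\mathrm{Level}_P(y)$. An element $x$ of a well-founded order $P$ is up-regular if for all $y,z$ with $\mathrm{Level}_P(x)<\mathrm{Level}_P(y)=\mathrm{Level}_P(z)$ we have $x<y\iff x<z$; $P$ is up-regular if all its elements are. *)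

(* Defs.v *)
From Stdlib Require Import Wellfounded.

(* [lim I f] denotes the least ordinal strictly above every [f i],
   i.e. sup { f i + 1 : i in I }. *)
Inductive ord : Type := lim : forall I : Type, (I -> ord) -> ord.

Fixpoint ole (s t : ord) {struct s} : Prop :=
  match s, t with
  | lim A f, lim B g => forall i : A, exists j : B, ole (f i) (g j)
  end.

Definition olt (s t : ord) : Prop :=
  match t with lim B g => exists j : B, ole s (g j) end.

Definition oeq (s t : ord) : Prop := ole s t /\ ole t s.

Definition Level {T : Type} (R : T -> T -> Prop) (wf : well_founded R) : T -> ord :=
  Fix wf (fun _ => ord)
      (fun x rec => lim {y : T | R y x} (fun y => rec (proj1_sig y) (proj2_sig y))).

Definition restr {T : Type} (R : T -> T -> Prop) (S : T -> Prop) : sig S -> sig S -> Prop :=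
  fun a b => R (proj1_sig a) (proj1_sig b).

Lemma wf_restr {T : Type} (R : T -> T -> Prop) (S : T -> Prop) :
  well_founded R -> well_founded (restr R S).
Proof. intro H. unfold restr. apply Inverse_Image.wf_inverse_image. exact H. Qed.

Definition level_induced {T : Type} (R : T -> T -> Prop) (wf : well_founded R)
  (S : T -> Prop) : Prop :=
  forall x y : sig S,
    oeq (Level (restr R S) (wf_restr R S wf) x) (Level (restr R S) (wf_restr R S wf) y)
    <-> oeq (Level R wf (proj1_sig x)) (Level R wf (proj1_sig y)).

Definition up_regular_elt {T : Type} (R : T -> T -> Prop) (wf : well_founded R) (x : T) : Prop :=
  forall y z : T, olt (Level R wf x) (Level R wf y) -> oeq (Level R wf y) (Level R wf z) ->
    (R x y <-> R x z).

Definition up_regular {T : Type} (R : T -> T -> Prop) (wf : well_founded R) : Prop :=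
  forall x : T, up_regular_elt R wf x.

Inductive four : Type := fa | fb | fc | fd.

Definition Oobs1 (u v : four) : Prop :=
  (u = fa /\ v = fb) \/ (u = fc /\ v = fd).

Definition Oobs2 (u v : four) : Prop :=
  (u = fa /\ v = fb) \/ (u = fc /\ v = fd) \/ (u = fc /\ v = fb).

Definition iso_to {T : Type} (R : T -> T -> Prop) (S : T -> Prop)
  (O : four -> four -> Prop) : Prop :=
  exists f : four -> T,
    (forall i j, f i = f j -> i = j) /\
    (forall t, S t <-> exists i, f i = t) /\
    (forall i j, O i j <-> R (f i) (f j)).

Definition itov {T : Type} (R : T -> T -> Prop) : Prop :=
  ~ (exists S, iso_to R S Oobs1) /\ ~ (exists S, iso_to R S Oobs2).

Definition strict_order {T : Type} (R : T -> T -> Prop) : Prop :=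
  (forall x, ~ R x x) /\ (forall x y z, R x y -> R y z -> R x z).

(* Main.v *)
Require Import Defs.
From Stdlib Require Import Wellfounded.
From Stdlib Require Import Classical FunctionalExtensionality.

Lemma ole_refl : forall s, ole s s.
Proof. induction s as [A f IH]; cbn; intro i; exists i; apply IH. Qed.

Lemma ole_trans : forall s t u, ole s t -> ole t u -> ole s u.
Proof.
  induction s as [A f IH]; intros [B g] [C h]; cbn; intros H1 H2 i.
  destruct (H1 i) as [j Hj]; destruct (H2 j) as [k Hk]; exists k; eauto.
Qed.

Lemma ole_lim : forall t B (g : B -> ord) j, ole t (g j) -> ole t (lim B g).
Proof.
  induction t as [A f IH]; intros B g j H. cbn. intro i. exists j.
  destruct (g j) as [C h]. cbn in H. destruct (H i) as [k Hk].
  exact (IH i C h k Hk).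
Qed.

Lemma olt_ole : forall s t, olt s t -> ole s t.
Proof. intros s [B g]; cbn; intros [j H]; eapply ole_lim; eauto. Qed.

Lemma lt_le_trans : forall s t u, olt s t -> ole t u -> olt s u.
Proof.
  intros s [B g] [C h]; cbn; intros [j Hj] H; destruct (H j) as [k Hk];
  exists k; eapply ole_trans; eauto.
Qed.

Lemma le_lt_trans : forall s t u, ole s t -> olt t u -> olt s u.
Proof. intros s t [C h]; cbn; intros H [k Hk]; exists k; eapply ole_trans; eauto. Qed.

Lemma olt_irrefl : forall s, ~ olt s s.
Proof.
  induction s as [A f IH]; cbn; intros [j Hj]. apply (IH j).
  eapply lt_le_trans with (t := lim A f). cbn; exists j; apply ole_refl. exact Hj.
Qed.

Lemma nle_lt : forall s t, ~ ole t s -> olt s t.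
Proof.
  induction s as [A f IH]; intros [B g] H. cbn in H. apply not_all_ex_not in H.
  destruct H as [j Hj]. cbn. exists j. destruct (g j) as [C h] eqn:E.
  cbn. intro i.
  specialize (IH i (lim C h) (fun H' => Hj (ex_intro _ i H'))). cbn in IH. exact IH.
Qed.

Lemma oeq_refl : forall s, oeq s s. Proof. split; apply ole_refl. Qed.
Lemma oeq_sym : forall s t, oeq s t -> oeq t s. Proof. intros s t [H1 H2]; split; auto. Qed.
Lemma oeq_trans : forall s t u, oeq s t -> oeq t u -> oeq s u.
Proof. intros s t u [H1 H2] [H3 H4]; split; eapply ole_trans; eauto. Qed.
Lemma olt_noeq : forall s t, olt s t -> ~ oeq s t.
Proof. intros s t H [H1 H2]. apply (olt_irrefl s). eapply lt_le_trans; eauto. Qed.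

Lemma Level_eq {T : Type} (R : T -> T -> Prop) (wf : well_founded R) (x : T) :
  Level R wf x = lim {y : T | R y x} (fun y => Level R wf (proj1_sig y)).
Proof.
  unfold Level. rewrite Fix_eq. reflexivity.
  intros x0 f g H. f_equal. apply functional_extensionality. intro y. apply H.
Qed.

Lemma Level_lt {T : Type} (R : T -> T -> Prop) (wf : well_founded R) a b :
  R a b -> olt (Level R wf a) (Level R wf b).
Proof.
  intro H. rewrite (Level_eq R wf b). cbn. exists (exist _ a H). apply ole_refl.
Qed.

Lemma nR_le {T : Type} (R : T -> T -> Prop) (wf : well_founded R) a b :
  ole (Level R wf b) (Level R wf a) -> ~ R a b.
Proof.
  intros H1 H2. apply (olt_irrefl (Level R wf a)).
  eapply lt_le_trans; [apply Level_lt; exact H2| exact H1].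
Qed.

Definition grp (i : four) : bool := match i with fa | fc => false | _ => true end.

Section LS.
Variables (T : Type) (R : T -> T -> Prop) (S : T -> Prop)
  (wfS : well_founded (restr R S)) (O : four -> four -> Prop) (f : four -> T)
  (Hiso : forall i j, O i j <-> R (f i) (f j))
  (HS : forall t, S t <-> exists i, f i = t)
  (HO1 : forall i j, O i j -> grp i = false /\ grp j = true)
  (HO2 : forall j, grp j = true -> exists i, O i j).

Lemma LS_zero (u : sig S) i : proj1_sig u = f i -> grp i = false ->
  forall w, ole (Level (restr R S) wfS u) w.
Proof.
  intros Hu Hg w. rewrite Level_eq. destruct w as [B g]. cbn [ole].
  intros [[s Ss] Hs0]. pose proof Hs0 as Hs. unfold restr in Hs. cbn in Hs.
  destruct (proj1 (HS s) Ss) as [k Hk]. rewrite Hu, <- Hk in Hs.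
  apply Hiso in Hs. apply HO1 in Hs. destruct Hs; congruence.
Qed.

Lemma LS_one_le (u v : sig S) i j : proj1_sig u = f i -> proj1_sig v = f j ->
  grp i = true -> grp j = true ->
  ole (Level (restr R S) wfS u) (Level (restr R S) wfS v).
Proof.
  intros Hu Hv Hi Hj. rewrite (Level_eq _ _ u), (Level_eq _ _ v). cbn [ole].
  intros [[s Ss] Hs]. destruct (HO2 j Hj) as [k0 Hk0].
  assert (Sk : S (f k0)) by (apply HS; eauto).
  assert (Rk : restr R S (exist S (f k0) Sk) v).
  { unfold restr; cbn. rewrite Hv. apply Hiso. exact Hk0. }
  exists (exist _ (exist S (f k0) Sk) Rk). cbn.
  destruct (proj1 (HS s) Ss) as [k Hk].
  pose proof Hs as Hs'.
  unfold restr in Hs'; cbn in Hs'. rewrite Hu, <- Hk in Hs'. apply Hiso, HO1 in Hs'.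
  eapply LS_zero with (i := k). cbn. auto. tauto.
Qed.

Lemma LS_one_nle (u v : sig S) i j : proj1_sig u = f i -> proj1_sig v = f j ->
  grp i = true -> grp j = false ->
  ~ ole (Level (restr R S) wfS u) (Level (restr R S) wfS v).
Proof.
  intros Hu Hv Hi Hj. rewrite (Level_eq _ _ u), (Level_eq _ _ v). cbn [ole].
  intro H. destruct (HO2 i Hi) as [k0 Hk0].
  assert (Sk : S (f k0)) by (apply HS; eauto).
  assert (Rk : restr R S (exist S (f k0) Sk) u).
  { unfold restr; cbn. rewrite Hu. apply Hiso. exact Hk0. }
  destruct (H (exist _ (exist S (f k0) Sk) Rk)) as [[[s Ss] Hs0] _].
  pose proof Hs0 as Hs.
  destruct (proj1 (HS s) Ss) as [k Hk].
  unfold restr in Hs; cbn in Hs. rewrite Hv, <- Hk in Hs. apply Hiso, HO1 in Hs.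
  destruct Hs; congruence.
Qed.

Lemma LS_oeq (u v : sig S) i j : proj1_sig u = f i -> proj1_sig v = f j ->
  (oeq (Level (restr R S) wfS u) (Level (restr R S) wfS v) <-> grp i = grp j).
Proof.
  intros Hu Hv. destruct (grp i) eqn:Ei, (grp j) eqn:Ej.
  - split; [auto|]. intros _. split; [apply (LS_one_le u v i j)|apply (LS_one_le v u j i)]; auto.
  - split; [intros [H1 H2]|discriminate]. exfalso; exact (LS_one_nle u v i j Hu Hv Ei Ej H1).
  - split; [intros [H1 H2]|discriminate]. exfalso; exact (LS_one_nle v u j i Hv Hu Ej Ei H2).
  - split; [auto|]. intros _. split; [apply (LS_zero u i)|apply (LS_zero v j)]; auto.
Qed.
End LS.

Lemma O1_1 : forall i j, Oobs1 i j -> grp i = false /\ grp j = true.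
Proof. unfold Oobs1; intros i j [[-> ->]|[-> ->]]; auto. Qed.
Lemma O1_2 : forall j, grp j = true -> exists i, Oobs1 i j.
Proof. unfold Oobs1; intros [] H; try discriminate; eauto. Qed.
Lemma O2_1 : forall i j, Oobs2 i j -> grp i = false /\ grp j = true.
Proof. unfold Oobs2; intros i j [[-> ->]|[[-> ->]|[-> ->]]]; auto. Qed.
Lemma O2_2 : forall j, grp j = true -> exists i, Oobs2 i j.
Proof. unfold Oobs2; intros [] H; try discriminate; eauto. Qed.

Lemma forward (T : Type) (R : T -> T -> Prop) (wf : well_founded R) (O : four -> four -> Prop) (S : T -> Prop)
  (HO1 : forall i j, O i j -> grp i = false /\ grp j = true)
  (HO2 : forall j, grp j = true -> exists i, O i j)
  (Hab : O fa fb) (Had : ~ O fa fd) :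
  up_regular R wf -> level_induced R wf S -> iso_to R S O -> False.
Proof.
  intros Hup HLI [f [Hinj [HS Hiso]]].
  assert (Sb : S (f fb)) by (apply HS; eauto).
  assert (Sd : S (f fd)) by (apply HS; eauto).
  pose proof (proj1 (HLI (exist S _ Sb) (exist S _ Sd))) as E.
  cbn in E.
  assert (Eq : oeq (Level R wf (f fb)) (Level R wf (f fd))).
  { apply E. apply (LS_oeq T R S _ O f Hiso HS HO1 HO2 (exist S _ Sb) (exist S _ Sd) fb fd eq_refl eq_refl). reflexivity. }
  apply Had, Hiso. apply (Hup (f fa) (f fb) (f fd)).
  - apply Level_lt, Hiso, Hab.
  - exact Eq.
  - apply Hiso, Hab.
Qed.

Lemma down (T : Type) (R : T -> T -> Prop) (Hord : strict_order R) (wf : well_founded R) :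
  forall w a, ole a (Level R wf w) -> exists c, (c = w \/ R c w) /\ oeq (Level R wf c) a.
Proof.
  intro w. induction w as [w IH] using (well_founded_induction wf). intros a Ha.
  destruct (classic (ole (Level R wf w) a)) as [H|H].
  - exists w. split; auto. split; auto.
  - apply nle_lt in H. rewrite Level_eq in H. cbn in H. destruct H as [[y Hy] Hay].
    cbn in Hay. destruct (IH y Hy a Hay) as [c [[->|Hc] Hc2]].
    + exists y; auto.
    + exists c; split; auto. right. eapply (proj2 Hord); eauto.
Qed.

Definition mkf {T : Type} (x y c z : T) (i : four) : T :=
  match i with fa => x | fb => y | fc => c | fd => z end.

Lemma build (T : Type) (R : T -> T -> Prop) (Hord : strict_order R) (wf : well_founded R) (O : four -> four -> Prop) (x y c z : T)
  (HO1 : forall i j, O i j -> grp i = false /\ grp j = true)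
  (HO2 : forall j, grp j = true -> exists i, O i j)
  (Hxy : R x y) (Hxz : ~ R x z) (Hcz : R c z)
  (Ecx : oeq (Level R wf c) (Level R wf x)) (Eyz : oeq (Level R wf y) (Level R wf z))
  (Lxy : olt (Level R wf x) (Level R wf y))
  (Hiso : (forall i j, (grp j = false \/ grp i = true) -> ~ R (mkf x y c z i) (mkf x y c z j)) ->
          forall i j, O i j <-> R (mkf x y c z i) (mkf x y c z j)) :
  exists S, level_induced R wf S /\ iso_to R S O.
Proof.
  set (f := mkf x y c z).
  set (L := Level R wf).
  assert (Hrep : forall i, oeq (L (f i)) (if grp i then L y else L x)).
  { intros []; cbn; auto using oeq_refl, oeq_sym. }
  assert (HP : forall i j, oeq (L (f i)) (L (f j)) <-> grp i = grp j).
  { intros i j. pose proof (Hrep i) as Hi. pose proof (Hrep j) as Hj.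
    destruct (grp i), (grp j); split; intro H; auto;
      try discriminate; try (eapply oeq_trans; [exact Hi|]; eapply oeq_trans; [|apply oeq_sym; exact Hj]; apply oeq_refl).
    - exfalso. apply (olt_noeq _ _ Lxy). apply oeq_sym.
      eapply oeq_trans; [apply oeq_sym; exact Hi|]. eapply oeq_trans; [exact H|exact Hj].
    - exfalso. apply (olt_noeq _ _ Lxy).
      eapply oeq_trans; [apply oeq_sym; exact Hi|]. eapply oeq_trans; [exact H|exact Hj]. }
  assert (HnR : forall i j, (grp j = false \/ grp i = true) -> ~ R (f i) (f j)).
  { intros i j Hg. apply (nR_le R wf). fold L.
    pose proof (Hrep i) as Hi. pose proof (Hrep j) as Hj.
    apply ole_trans with (if grp j then L y else L x); [apply Hj|].
    apply ole_trans with (if grp i then L y else L x); [|apply Hi].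
    destruct (grp i), (grp j); try apply ole_refl; try (apply olt_ole; exact Lxy).
    destruct Hg; discriminate. }
  specialize (Hiso HnR).
  exists (fun t => exists i, f i = t). split.
  - intros [u [i Hi]] [v [j Hj]]. cbn.
    rewrite (LS_oeq T R _ _ O f Hiso (fun t => iff_refl _) HO1 HO2
      (exist _ u (ex_intro _ i Hi)) (exist _ v (ex_intro _ j Hj)) i j (eq_sym Hi) (eq_sym Hj)).
    subst. symmetry. apply HP.
  - exists f. split; [|split; [intro t; reflexivity|exact Hiso]].
    intros i j E. destruct (Bool.bool_dec (grp i) (grp j)) as [G|G].
    + destruct i, j; try reflexivity; try discriminate G; unfold f, mkf in E; exfalso.
      * apply Hxz; rewrite E; exact Hcz.
      * apply Hxz; rewrite <- E; exact Hxy.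
      * apply Hxz; rewrite <- E; exact Hcz.
      * apply Hxz; rewrite E; exact Hxy.
    + exfalso. apply G. apply HP. rewrite E. apply oeq_refl.
Qed.

Ltac iso_tac Hxy Hxz Hcz Hcy HnR :=
  let H := fresh "H" in
  intros i j; destruct i, j; unfold Oobs1, Oobs2; (split;
  [ intro H; decompose [or and] H; try discriminate; assumption
  | intro H; first [ (left; split; reflexivity) | (right; left; split; reflexivity)
          | (right; right; split; reflexivity) | (right; split; reflexivity)
          | (exfalso; first [refine (HnR _ _ _ H); cbn; ((left; reflexivity) || (right; reflexivity))
                            | exact (Hxz H) | exact (Hcy H)]) ] ]).

Theorem mainTheorem10 :
  forall (T : Type) (R : T -> T -> Prop) (Hord : strict_order R) (wf : well_founded R),
    (up_regular R wf <->
       (~ exists S, level_induced R wf S /\ iso_to R S Oobs1) /\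
       (~ exists S, level_induced R wf S /\ iso_to R S Oobs2))
    /\ (itov R -> up_regular R wf).
Proof.
  intros T R Hord wf.
  assert (Iff : up_regular R wf <->
       (~ exists S, level_induced R wf S /\ iso_to R S Oobs1) /\
       (~ exists S, level_induced R wf S /\ iso_to R S Oobs2)).
  { split.
    - intros Hup; split; intros [S [HLI Hi]].
      + eapply (forward T R wf Oobs1 S O1_1 O1_2); eauto.
        * left; auto.
        * unfold Oobs1; intuition discriminate.
      + eapply (forward T R wf Oobs2 S O2_1 O2_2); eauto.
        * left; auto.
        * unfold Oobs2; intuition discriminate.
    - intros [N1 N2].
      assert (G : forall x y z, olt (Level R wf x) (Level R wf y) ->
                  oeq (Level R wf y) (Level R wf z) -> R x y -> ~ R x z -> False).
      { intros x y z Lxy Eyz Hxy Hxz.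
        assert (Lxz : olt (Level R wf x) (Level R wf z)) by
          (eapply lt_le_trans; [exact Lxy| apply Eyz]).
        rewrite (Level_eq R wf z) in Lxz. cbn [olt] in Lxz. destruct Lxz as [[w Hw] Hxw]. cbn in Hxw.
        destruct (down T R Hord wf w _ Hxw) as [c [Hc Ecx]].
        assert (Hcz : R c z) by (destruct Hc as [->|Hc]; [exact Hw| eapply (proj2 Hord); eauto]).
        destruct (classic (R c y)) as [Hcy|Hcy].
        - apply N2. apply (build T R Hord wf Oobs2 x y c z O2_1 O2_2 Hxy Hxz Hcz Ecx Eyz Lxy).
          intros HnR. iso_tac Hxy Hxz Hcz Hcy HnR.
        - apply N1. apply (build T R Hord wf Oobs1 x y c z O1_1 O1_2 Hxy Hxz Hcz Ecx Eyz Lxy).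
          intros HnR. iso_tac Hxy Hxz Hcz Hcy HnR. }
      intros x y z Lxy Eyz.
      destruct (classic (R x y)) as [H1|H1]; destruct (classic (R x z)) as [H2|H2];
        try tauto.
      + exfalso; eauto.
      + exfalso. apply (G x z y); auto.
        * eapply lt_le_trans; [exact Lxy| apply Eyz].
        * apply oeq_sym; exact Eyz. }
  split; [exact Iff|].
  intros [N1 N2]. apply Iff. split; intros [S [_ H]]; [apply N1|apply N2]; eauto.
Qed.
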